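(* Let $J\subset I$, $w\in W^J$ and $u\in W$ with $l(uw)=l(u)+l(w)$. Write $uw=xv$ with $x\in W^J$ and $v\in W_J$. Then for any $v'\in W$ with $v'\le v$ there exists $u'\in W$ with $u'\le u$ such that $u'w=xv'$.
   Context: $W$ is the Weyl group of a semisimple group with simple reflections $s_i$, $i\in I$, length $l$ and Bruhat order $\le$. For $J\subset I$, $W_J$ is the subgroup generated by $\{s_j:j\in J\}$ and $W^J$ the set of minimal length representatives of $W/W_J$. *)

(* Defs.v *)
From mathcomp Require Import all_boot all_order all_fingroup.
Set Implicit Arguments. Unset Strict Implicit. Unset Printing Implicit Defensive.
Local Open Scope group_scope.

Section Coxeter.
Variables (gT : finGroupType) (I : finType) (s : I -> gT).

Definition word_eval (t : seq I) : gT := \prod_(i <- t) s i.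

Definition cox_m (i j : I) : nat := #[s i * s j].
Definition cox_rel (i j : I) : seq I :=
  mkseq (fun k => if odd k then j else i) (2 * cox_m i j).

Definition cox_step (a b : seq I) : Prop :=
  exists p q i j, a = p ++ cox_rel i j ++ q /\ b = p ++ q.

Inductive cox_equiv : seq I -> seq I -> Prop :=
| cox_equiv_refl a : cox_equiv a a
| cox_equiv_step a b : cox_step a b -> cox_equiv a b
| cox_equiv_sym a b : cox_equiv a b -> cox_equiv b a
| cox_equiv_trans a b c : cox_equiv a b -> cox_equiv b c -> cox_equiv a c.

(* (W, {s_i}) is a Coxeter system: W generated by distinct involutions s_i,
   and W has the presentation < s_i | (s_i s_j)^m(i,j) = 1 >, i.e. two words
   have the same value iff they are equal modulo the relators. *)
Definition coxeter_system : Prop :=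
  [/\ <<[set s i | i in I]>> = [set: gT],
      injective s,
      (forall i, s i != 1 /\ s i ^+ 2 = 1) &
      (forall a b : seq I, word_eval a = word_eval b -> cox_equiv a b)].

(* crystallographic condition: m(i,j) in {2,3,4,6} for i <> j.  Finite
   Coxeter groups satisfying it are exactly the Weyl groups of (reduced)
   root systems, i.e. of semisimple groups. *)
Definition crystallographic : Prop :=
  forall i j, i != j -> cox_m i j \in [:: 2; 3; 4; 6]%N.

(* length l(w): least n such that w is a product of n generators
   (searched among n < #|W|, which suffices when W is generated by the s_i). *)
Definition cox_len (w : gT) : nat :=
  find (fun n => [exists t : n.-tuple I, word_eval t == w]) (iota 0 #|gT|).

Definition reflections : {set gT} := \bigcup_(i : I) (s i ^: [set: gT]).

Inductive bruhat : gT -> gT -> Prop :=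
| bruhat_refl x : bruhat x x
| bruhat_step x y t : bruhat x y -> t \in reflections ->
    (cox_len y < cox_len (y * t))%N -> bruhat x (y * t).

Definition parabolic (J : {set I}) : {set gT} := <<[set s j | j in J]>>.

Definition min_reps (J : {set I}) : {set gT} :=
  [set w | [forall v in parabolic J, (cox_len w <= cox_len (w * v))%N]].

End Coxeter.

(* Main.v *)
Require Import Defs.
From mathcomp Require Import all_boot all_order all_fingroup zify.
Set Implicit Arguments. Unset Strict Implicit. Unset Printing Implicit Defensive.
Local Open Scope group_scope.

Ltac llia := repeat (match goal with
  | |- context [cox_len ?s ?g] => let n := fresh "n" in set (n := cox_len s g) in *; clearbody n
  | H : context [cox_len ?s ?g] |- _ => let n := fresh "n" in set (n := cox_len s g) in *; clearbody n
  end); lia.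

Section Cox.
Variables (gT : finGroupType) (I : finType) (s : I -> gT).
Hypothesis Hgen : <<[set s i | i in I]>> = [set: gT].
Hypothesis Hinv : forall i, s i * s i = 1.
Hypothesis Hpres : forall a b : seq I, word_eval s a = word_eval s b -> cox_equiv s a b.

Local Notation we := (word_eval s).
Local Notation L := (cox_len s).

Lemma we_nil : we [::] = 1. Proof. by rewrite /word_eval big_nil. Qed.
Lemma we_cons i a : we (i :: a) = s i * we a. Proof. by rewrite /word_eval big_cons. Qed.
Lemma we_cat a b : we (a ++ b) = we a * we b. Proof. by rewrite /word_eval big_cat. Qed.

Lemma sV i : (s i)^-1 = s i.
Proof. by apply: (mulgI (s i)); rewrite mulgV Hinv. Qed.

Lemma word_in (K : {pred I}) g : g \in <<[set s i | i in K]>> ->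
  exists a : seq I, all (mem K) a /\ we a = g.
Proof.
move=> /gen_prodgP [n [c Hc ->]].
elim: n c Hc => [|n IH] c Hc.
  by exists [::]; rewrite big_ord0 we_nil.
have [a [Ha Hae]] := IH (fun i => c (widen_ord (leqnSn n) i)) (fun i => Hc _).
have /imsetP [j Hj Hcj] := Hc ord_max.
exists (a ++ [:: j]); split.
  by rewrite all_cat Ha /= Hj.
rewrite we_cat Hae big_ord_recr /= we_cons we_nil mulg1 Hcj.
by congr (_ * _); apply: eq_bigr => i _.
Qed.

Lemma word_exists g : exists a, we a = g.
Proof.
have : g \in <<[set s i | i in I]>> by rewrite Hgen inE.
by case/word_in => a [_ ?]; exists a.
Qed.

Lemma short_word g : exists a, we a = g /\ size a < #|gT|.
Proof.
have [a0 Ha0] := word_exists g.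
pose P n := [exists t : n.-tuple I, we t == g].
have exP : exists n, P n by exists (size a0); apply/existsP; exists (in_tuple a0); rewrite Ha0.
case: (ex_minnP exP) => n /existsP [t /eqP Ht] Hmin.
exists t; split => //; rewrite size_tuple.
rewrite ltnNge; apply/negP => Hle.
pose f (k : 'I_n.+1) := we (take k t).
have : ~~ injectiveb f.
  apply/negP => /injectiveP Hinj.
  move: (leq_card f Hinj); rewrite card_ord.
  by move=> H; move: (leq_trans H Hle); rewrite ltnn.
move=> /injectivePn [i [j Hij Hfij]].
wlog lt_ij : i j Hij Hfij / i < j.
  move=> Hw; case: (ltngtP i j) => H; first exact: (Hw i j).
  - by apply: (Hw j i) => //; rewrite eq_sym.
  - by move: Hij; rewrite (val_inj H) eqxx.
pose t' := take i t ++ drop j t.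
have Ht' : we t' = g.
  by rewrite /t' we_cat -/(f i) Hfij /f -we_cat cat_take_drop.
have : n <= size t'.
  apply: Hmin; apply/existsP; exists (in_tuple t'); by rewrite Ht'.
rewrite /t' size_cat size_take size_drop size_tuple.
have Hi : i < n by apply: leq_trans lt_ij (ltn_ord j).
rewrite Hi => H; have Hj := ltn_ord j; lia.
Qed.

Lemma len_spec g : exists a, we a = g /\ size a = L g.
Proof.
have [a [Ha Hs]] := short_word g.
pose p := fun n => [exists t : n.-tuple I, we t == g].
have Hhas : has p (iota 0 #|gT|).
  apply/hasP; exists (size a); first by rewrite mem_iota.
  by apply/existsP; exists (in_tuple a); rewrite Ha.
have := nth_find 0 Hhas.
rewrite /cox_len -/p nth_iota ?add0n; last by move: Hhas; rewrite has_find size_iota.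
by case/existsP => t /eqP Ht; exists t; rewrite size_tuple.
Qed.

Lemma len_le a : L (we a) <= size a.
Proof.
rewrite /cox_len; set p := fun n => _.
case: (ltnP (size a) #|gT|) => H.
  rewrite leqNgt; apply/negP => /(before_find 0).
  rewrite nth_iota // add0n /p => /existsP; apply.
  by exists (in_tuple a).
by apply: leq_trans (find_size _ _) _; rewrite size_iota.
Qed.

Fixpoint rseq (a : seq I) : seq gT :=
  if a is i :: b then s i :: map (fun t => t ^ (s i)^-1) (rseq b) else [::].

Lemma rseq_cat a b :
  rseq (a ++ b) = rseq a ++ map (fun t => t ^ (we a)^-1) (rseq b).
Proof.
elim: a => [|i a IH] /=.
  by rewrite we_nil invg1; under eq_map do rewrite conjg1; rewrite map_id.
rewrite IH map_cat -map_comp; congr (_ :: (_ ++ _)).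
by apply: eq_map => t /=; rewrite -conjgM -invgM we_cons.
Qed.

Lemma rseq_del a t : t \in rseq a -> exists a', size a' < size a /\ t * we a = we a'.
Proof.
elim: a t => [|i a IH] t //=; rewrite inE => /orP [/eqP -> | /mapP [u Hu ->]].
  by exists a; rewrite we_cons mulgA Hinv mul1g.
have [a' [Hs He]] := IH _ Hu.
exists (i :: a'); split => //.
by rewrite !we_cons -He conjgE invgK sV !mulgA -(mulgA (s i * u)) Hinv mulg1.
Qed.

Definition alt (n : nat) (i j : I) := mkseq (fun k => if odd k then j else i) n.

Lemma mkseqS' (T : Type) (f : nat -> T) n : mkseq f n.+1 = f 0 :: mkseq (fun k => f k.+1) n.
Proof.
by rewrite /mkseq /= -(addn0 1%N) iotaDl -map_comp.
Qed.

Lemma altS n i j : alt n.+1 i j = i :: alt n j i.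
Proof.
rewrite /alt mkseqS' /=; congr (_ :: _); apply: eq_mkseq => k /=.
by case: (odd k).
Qed.

Lemma alt_shift (x y : gT) k : x * (y * x) ^+ k = (x * y) ^+ k * x.
Proof.
elim: k => [|k IH]; first by rewrite !expg0 mulg1 mul1g.
by rewrite !expgSr mulgA IH -!mulgA.
Qed.

Lemma rseq_alt n i j : rseq (alt n i j) = mkseq (fun k => (s i * s j) ^+ k * s i) n.
Proof.
elim: n i j => [|n IH] i j //.
rewrite altS /= IH mkseqS' expg0 mul1g; congr (_ :: _).
rewrite /mkseq -map_comp; apply: eq_map => k /=.
rewrite conjgE invgK sV -alt_shift expgS !mulgA.
by [].
Qed.

Lemma we_alt k i j : we (alt (2 * k) i j) = (s i * s j) ^+ k.
Proof.
elim: k => [|k IH]; first by rewrite /alt /= we_nil expg0.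
by rewrite mulnS !altS !we_cons IH expgS mulgA.
Qed.

Lemma rseq_rel i j : exists r, rseq (cox_rel s i j) = r ++ r.
Proof.
have -> : cox_rel s i j = alt (cox_m s i j + cox_m s i j) i j by rewrite /cox_rel addnn -mul2n.
rewrite rseq_alt; set m := cox_m s i j; set f := (fun k : nat => _).
exists (mkseq f m).
rewrite /mkseq iotaD add0n map_cat; congr (_ ++ _).
rewrite -[m in iota m]addn0 iotaDl -map_comp; apply: eq_map => k /=.
by rewrite /f expgnDr expg_order mul1g.
Qed.

Lemma we_rel i j : we (cox_rel s i j) = 1.
Proof.
by rewrite /cox_rel -/(alt _ i j) we_alt expg_order.
Qed.

Lemma step_par a b t : cox_step s a b ->
  odd (count_mem t (rseq a)) = odd (count_mem t (rseq b)).
Proof.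
case=> p [q [i [j [-> ->]]]].
have [r Hr] := rseq_rel i j.
rewrite !rseq_cat Hr we_rel invg1 !map_cat !count_cat.
under [map (fun t => t ^ 1) _]eq_map do rewrite conjg1.
rewrite map_id !oddD addbb.
by case: (odd _); case: (odd _).
Qed.

Lemma equiv_par a b t : cox_equiv s a b ->
  odd (count_mem t (rseq a)) = odd (count_mem t (rseq b)).
Proof.
elim=> [x|x y /step_par //|x y _ ->|x y z _ -> _ ->] //.
Qed.

Lemma word_exists' g : exists a, we a == g.
Proof. by have [a Ha] := word_exists g; exists a; apply/eqP. Qed.

Definition eta (g t : gT) : bool := odd (count_mem t (rseq (xchoose (word_exists' g)))).

Lemma eta_we a t : eta (we a) t = odd (count_mem t (rseq a)).
Proof.
rewrite /eta; apply: equiv_par; apply: Hpres.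
exact/eqP/(xchooseP (word_exists' (we a))).
Qed.

Lemma eta_mul x y t : eta (x * y) t = eta x t (+) eta y (t ^ x).
Proof.
have [a <-] := word_exists x; have [b <-] := word_exists y.
rewrite -we_cat !eta_we rseq_cat count_cat oddD count_map; congr (_ (+) odd _).
apply: eq_count => u /=; rewrite /preim /= [u == _]eq_sym.
by rewrite (can2_eq (conjgKV _) (conjgK _)) eq_sym.
Qed.

Lemma eta_s i t : eta (s i) t = (t == s i).
Proof.
have E : s i = we [:: i] by rewrite we_cons we_nil mulg1.
by rewrite {1}E eta_we /= addn0 oddb eq_sym.
Qed.

Lemma eta_1 t : eta 1 t = false.
Proof. by rewrite -we_nil eta_we. Qed.

Lemma reflP r : reflect (exists i g, r = s i ^ g) (r \in reflections s).
Proof.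
apply: (iffP bigcupP) => [[i _ /imsetP [g _ ->]]|[i [g ->]]]; first by exists i, g.
by exists i => //; apply: memJ_class; rewrite inE.
Qed.

Lemma refl_s i : s i \in reflections s.
Proof. by apply/reflP; exists i, 1; rewrite conjg1. Qed.

Lemma refl_conj r g : r \in reflections s -> r ^ g \in reflections s.
Proof. by case/reflP => i [h ->]; apply/reflP; exists i, (h * g); rewrite conjgM. Qed.

Lemma refl_inv r : r \in reflections s -> r * r = 1.
Proof.
case/reflP => i [g ->]; rewrite -conjMg Hinv; exact: conj1g.
Qed.

Lemma conj_self (r : gT) : r ^ r = r.
Proof. by rewrite conjgE mulKg. Qed.

Lemma eta_refl r : r \in reflections s -> eta r r.
Proof.
case/reflP => i [g Er].
have E1 : r ^ g^-1 = s i by rewrite Er conjgK.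
have E2 : r ^ (g^-1 * s i) = s i by rewrite conjgM E1 conj_self.
have Er' : r = g^-1 * s i * g by rewrite Er conjgE mulgA.
rewrite {1}Er' !eta_mul E1 E2 eta_s eqxx.
have := eta_1 r; rewrite -(mulVg g) eta_mul E1.
by case: (eta _ r); case: (eta g _).
Qed.

Lemma len_le' a g : we a = g -> L g <= size a.
Proof. by move=> <-; apply: len_le. Qed.

Lemma exch1 r w : r \in reflections s -> eta w r -> L (r * w) < L w.
Proof.
move=> Hr; have [a [Ha Hs]] := len_spec w.
rewrite -Ha eta_we => Hodd.
have : r \in rseq a.
  by rewrite -has_pred1 has_count; case: (count _ _) Hodd.
case/rseq_del => a' [Hs' He]; rewrite He.
by apply: leq_ltn_trans (len_le _) _; rewrite Ha -Hs.
Qed.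

Lemma exch r w : r \in reflections s -> (L (r * w) < L w) = eta w r.
Proof.
move=> Hr; apply/idP/idP; last exact: exch1.
move=> Hlt; apply/negP => /negP Hn.
have : eta (r * w) r by rewrite eta_mul eta_refl // conj_self (negbTE Hn).
move/(exch1 Hr); rewrite mulgA refl_inv // mul1g => H.
by move: (ltn_trans H Hlt); rewrite ltnn.
Qed.

Lemma len_neq r w : r \in reflections s -> L (r * w) != L w.
Proof.
move=> Hr; case E: (eta w r).
  by rewrite neq_ltn exch // E.
have : eta (r * w) r by rewrite eta_mul eta_refl // conj_self E.
rewrite -exch // mulgA refl_inv // mul1g => H.
by rewrite neq_ltn H orbT.
Qed.

Lemma len_mul x y : L (x * y) <= L x + L y.
Proof.
have [a [Ha Hsa]] := len_spec x; have [b [Hb Hsb]] := len_spec y.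
by rewrite -Hsa -Hsb -Ha -Hb -we_cat -size_cat len_le.
Qed.

Lemma len_si i : L (s i) <= 1.
Proof. by apply: (len_le' (a := [:: i])); rewrite we_cons we_nil mulg1. Qed.

Lemma len_sw i w : L (s i * w) <= (L w).+1.
Proof. by apply: leq_trans (len_mul _ _) _; rewrite -add1n leq_add2r len_si. Qed.

Lemma len_sw' i w : L w <= (L (s i * w)).+1.
Proof. by rewrite -{1}(mul1g w) -(Hinv i) -mulgA len_sw. Qed.

Lemma we_rev a : we (rev a) = (we a)^-1.
Proof.
elim: a => [|i a IH]; first by rewrite we_nil invg1.
by rewrite rev_cons -cats1 we_cat IH we_cons we_cons we_nil mulg1 invMg sV.
Qed.

Lemma len_inv x : L (x^-1) = L x.
Proof.
have H y : L (y^-1) <= L y.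
  by have [a [Ha Hs]] := len_spec y; rewrite -Hs -Ha -we_rev -(size_rev a) len_le.
by apply/eqP; rewrite eqn_leq H -{1}(invgK x) H.
Qed.

Lemma len1g : L 1 = 0.
Proof. by apply/eqP; rewrite -leqn0 (len_le' (a := [::])) // we_nil. Qed.

Lemma len0 w : L w = 0 -> w = 1.
Proof. by have [[|i a] [Ha Hs]] := len_spec w; rewrite -Hs -Ha ?we_nil. Qed.

Lemma len1 w : L w = 1%N -> exists i, w = s i.
Proof.
have [[|i [|j a]] [Ha Hs]] := len_spec w; rewrite -Hs -Ha //.
by exists i; rewrite we_cons we_nil mulg1.
Qed.

Local Notation br := (bruhat s).

Lemma br_trans x y z : br x y -> br y z -> br x z.
Proof.
move=> Hxy Hyz; elim: Hyz Hxy => // y0 z0 t _ IH Ht Hl Hx.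
by apply: bruhat_step => //; apply: IH.
Qed.

Lemma br_lstep a b r : br a b -> r \in reflections s -> L b < L (r * b) -> br a (r * b).
Proof.
move=> Hab Hr Hl; have E : r * b = b * (r ^ b) by rewrite conjgE mulKVg.
by rewrite E; apply: bruhat_step; rewrite ?refl_conj // -E.
Qed.

Lemma br_sup k y : L y < L (s k * y) -> br y (s k * y).
Proof. by move=> H; apply: br_lstep => //; [constructor | apply: refl_s]. Qed.

Lemma br_sdown k y : L (s k * y) < L y -> br (s k * y) y.
Proof.
move=> H; have := @br_sup k (s k * y).
by rewrite mulgA Hinv mul1g; apply.
Qed.

Lemma br_len x y : br x y -> x = y \/ L x < L y.
Proof.
elim=> [x0|x0 y0 t _ [->|IH] _ Hl]; [by left|by right|right].
exact: ltn_trans IH Hl.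
Qed.

Lemma len_s_cases k w : L w < L (s k * w) \/ L (s k * w) < L w.
Proof.
have := len_neq w (refl_s k); rewrite neq_ltn => /orP [H|H]; by [right|left].
Qed.

Lemma keyK k z t : t \in reflections s -> L z < L (z * t) ->
  L (s k * (z * t)) < L (z * t) ->
  s k * z = z * t \/ L (s k * z) < L (s k * (z * t)).
Proof.
move=> Ht Hl1 Hl2; set y := z * t in Hl1 Hl2 *.
set r := t ^ z^-1.
have Hr : r \in reflections s by apply: refl_conj.
have Ery : r * y = z.
  by rewrite /r /y conjgE invgK !mulgA mulgKV -mulgA refl_inv // mulg1.
clearbody r.
have : eta y r by rewrite -exch // Ery.
have Ey : y = s k * (s k * y) by rewrite mulgA Hinv mul1g.
rewrite {1}Ey eta_mul eta_s.
case: eqP => [Ers _|_ /= He]; first by left; rewrite -Ery Ers mulgA Hinv mul1g.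
right; move: He; rewrite -exch ?refl_conj //.
suff -> : r ^ s k * (s k * y) = s k * z by [].
rewrite -[in RHS]Ery conjgE sV -!mulgA; congr (_ * (_ * _)).
by rewrite mulgA Hinv mul1g.
Qed.

Lemma claim12 k x y : br x y ->
  (L y < L (s k * y) -> br (s k * x) (s k * y)) /\
  (L (s k * y) < L y -> br (s k * x) y).
Proof.
elim=> [x0|x0 y0 t Hxy [IH1 IH2] Ht Hlen].
  by split=> [_|H]; [constructor | apply: br_sdown].
have Hsw := len_sw k y0; have Hsw' := len_sw' k (y0 * t).
split=> H.
  case: (len_s_cases k y0) => H0.
    rewrite mulgA; apply: bruhat_step => //; first exact: IH1.
    by rewrite -mulgA; apply: leq_ltn_trans Hsw _; exact: leq_ltn_trans Hlen H.
  apply: br_trans (IH2 H0) _.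
  apply: br_trans _ (br_sup H).
  exact: bruhat_step (bruhat_refl s _) Ht Hlen.
case: (len_s_cases k y0) => H0.
  case: (keyK Ht Hlen H) => [E|H1].
    by rewrite -E; apply: IH1.
  apply: br_trans _ (br_sdown H).
  rewrite mulgA; apply: bruhat_step => //; first exact: IH1.
  by rewrite -mulgA.
apply: br_trans (IH2 H0) _.
exact: bruhat_step (bruhat_refl s _) Ht Hlen.
Qed.

Lemma claim1 k x y : br x y -> L y < L (s k * y) -> br (s k * x) (s k * y).
Proof. by move=> H; case: (claim12 k H). Qed.

Lemma claim3 k x y : br x y -> L (s k * y) < L y ->
  br x (s k * y) \/ br (s k * x) (s k * y).
Proof.
elim=> [x0 _|x0 y0 t Hxy IH3 Ht Hlen H]; first by right; constructor.
have Hsw := len_sw k y0; have Hsw' := len_sw' k (y0 * t).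
case: (len_s_cases k y0) => H0.
  case: (keyK Ht Hlen H) => [E|H1].
    left; have -> : s k * (y0 * t) = y0 by rewrite -E mulgA Hinv mul1g.
    by [].
  left; apply: br_trans Hxy _; apply: br_trans (br_sup H0) _.
  by rewrite mulgA; apply: bruhat_step (bruhat_refl s _) Ht _; rewrite -mulgA.
have Hst : br (s k * y0) (s k * (y0 * t)).
  by rewrite mulgA; apply: bruhat_step (bruhat_refl s _) Ht _; rewrite -mulgA -ltnS; apply: leq_trans Hsw'; exact: leq_ltn_trans H0 Hlen.
by case: (IH3 H0) => H3; [left|right]; apply: br_trans H3 Hst.
Qed.

Variable J : {set I}.
Local Notation P := (parabolic s J).
Local Notation M := (min_reps s J).

Lemma minP x v : x \in M -> v \in P -> L x <= L (x * v).
Proof. by rewrite inE => /forall_inP H /H. Qed.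

Lemma sP j : j \in J -> s j \in P.
Proof. by move=> Hj; apply: mem_gen; apply: imset_f. Qed.

Lemma weP a : all (mem J) a -> we a \in P.
Proof.
elim: a => [|i a IH] /=; first by rewrite we_nil group1.
by case/andP => Hi Ha; rewrite we_cons groupM ?sP ?IH.
Qed.

Lemma conj_mulg (y g : gT) : (y ^ g^-1) * g = g * y.
Proof. by rewrite conjgE invgK mulgA mulgKV. Qed.

Lemma conj_mul g j : (s j ^ g^-1) * g = g * s j.
Proof. by rewrite conjgE invgK mulgA mulgKV. Qed.

Lemma len_rs g j : L (g * s j) != L g.
Proof. by rewrite -conj_mul len_neq // refl_conj // refl_s. Qed.

Lemma len_ws g j : L (g * s j) <= (L g).+1.
Proof. by apply: leq_trans (len_mul _ _) _; rewrite -addn1 leq_add2l len_si. Qed.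

Lemma len_ws' g j : L g <= (L (g * s j)).+1.
Proof. by rewrite -{1}(mulg1 g) -(Hinv j) mulgA len_ws. Qed.

Lemma addA x v : x \in M -> v \in P -> L (x * v) = L x + L v.
Proof.
move=> Hx /word_in [a [Ha <-]].
elim/last_ind: a Ha => [|a j IH]; first by rewrite we_nil mulg1 len1g addn0.
rewrite all_rcons => /andP [Hj Ha]; have {}IH := IH Ha.
set v' := we a in IH *.
have Hv' : v' \in P by apply: weP.
have Ev : we (rcons a j) = v' * s j by rewrite -cats1 we_cat we_cons we_nil mulg1.
rewrite Ev.
have H1 := len_ws v' j; have H2 := len_ws' v' j.
have H3 := len_rs v' j.
have H4 : L (x * (v' * s j)) <= (L (x * v')).+1 by rewrite mulgA len_ws.
have H5 : L (x * v') <= (L (x * (v' * s j))).+1 by rewrite mulgA len_ws'.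
have H6 : L (x * (v' * s j)) != L (x * v') by rewrite mulgA len_rs.
have H7 : L (x * (v' * s j)) <= L x + L (v' * s j) by apply: len_mul.
case: (ltngtP (L (v' * s j)) (L v')) => Hc; last by rewrite Hc eqxx in H3.
  llia.
have Hlt : L (x * v') < L (x * (v' * s j)).
  rewrite ltn_neqAle eq_sym H6 /=.
  rewrite leqNgt; apply/negP => Hgt.
  set r := s j ^ (x * v')^-1.
  have Hr : r \in reflections s by rewrite refl_conj // refl_s.
  have Er : r = (s j ^ v'^-1) ^ x^-1 by rewrite /r invMg conjgM.
  move: Hgt; rewrite mulgA -conj_mul -/r exch // eta_mul.
  case Ex: (eta x r) => /= H.
    have := exch1 Hr Ex; rewrite Er conj_mulg.
    have := minP Hx (groupJ (sP Hj) (groupVr Hv')).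
    by move=> Hq Hb; move: (leq_ltn_trans Hq Hb); rewrite ltnn.
  have Hr' : r ^ x \in reflections s by rewrite refl_conj.
  move: H; rewrite -exch // Er conjgKV conj_mulg => Hb.
  by move: (ltn_trans Hc Hb); rewrite ltnn.
llia.
Qed.

Lemma decomp g : exists x v, [/\ x \in M, v \in P & g = x * v].
Proof.
have Hg : g^-1 * g \in P by rewrite mulVg group1.
case: (@arg_minnP _ g (fun y => g^-1 * y \in P) (fun y => L y) Hg) => x Hx Hmin.
exists x, (x^-1 * g); split; last by rewrite mulKVg.
- rewrite inE; apply/forall_inP => v Hv; apply: Hmin.
  by rewrite /= mulgA groupM.
- by rewrite -(invgK (x^-1 * g)) invMg invgK groupV.
Qed.

Lemma uniq_dec x y v v' : x \in M -> y \in M -> v \in P -> v' \in P ->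
  x * v = y * v' -> x = y /\ v = v'.
Proof.
move=> Hx Hy Hv Hv' E.
have Ex : x = y * (v' * v^-1) by rewrite mulgA -E mulgK.
have Ey : y = x * (v * v'^-1) by rewrite mulgA E mulgK.
have P1 : v' * v^-1 \in P by rewrite groupM ?groupV.
have P2 : v * v'^-1 \in P by rewrite groupM ?groupV.
have A1 := addA Hy P1; have A2 := addA Hx P2.
rewrite -Ex in A1; rewrite -Ey in A2.
have : L (v' * v^-1) = 0 by lia.
move/len0 => /eqP; rewrite mulg_eq1 => /eqP Evv.
have Hvv : v = v' by rewrite Evv invgK.
by split => //; move: E; rewrite Hvv => /mulIg.
Qed.

Lemma mainL n : forall u w x v v', L u = n -> w \in M ->
  L (u * w) = L u + L w -> x \in M -> v \in P -> u * w = x * v ->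
  br v' v -> exists u', br u' u /\ u' * w = x * v'.
Proof.
elim: n => [|n IH] u w x v v' Hu Hw Hl Hx Hv E Hb.
  have Eu := len0 Hu; rewrite Eu mul1g in E.
  have [_ Ev] := uniq_dec Hw Hx (group1 P) Hv (etrans (mulg1 w) E).
  subst v; case: (br_len Hb) => [Ev'|]; last by rewrite len1g.
  exists 1; rewrite Eu Ev' mul1g; split; first exact: bruhat_refl.
  by rewrite E.
have [a [Ha Hs]] := len_spec u; rewrite Hu in Hs.
case: a Ha Hs => [|i b] // Ha [Hsb].
set u1 := we b.
have Eu : u = s i * u1 by rewrite -Ha we_cons.
have Lu1 : L u1 = n.
  apply/eqP; rewrite eqn_leq -{1}Hsb len_le /=.
  by rewrite -ltnS -Hu Eu len_sw.
have Lu1w : L (u1 * w) = L u1 + L w.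
  have H1 := len_mul u1 w.
  have H2 : L (u * w) <= (L (u1 * w)).+1 by rewrite Eu -mulgA len_sw.
  llia.
have [x1 [v1 [Hx1 Hv1 E1]]] := decomp (u1 * w).
have [y [v0 [Hy Hv0 E0]]] := decomp (s i * x1).
have Exv : x * v = y * (v0 * v1) by rewrite -E Eu -mulgA E1 mulgA E0 mulgA.
have [Exy Evv] := uniq_dec Hx Hy Hv (groupM Hv0 Hv1) Exv.
rewrite -Exy in E0.
have A1 := addA Hx Hv; have A2 := addA Hx1 Hv1; have A3 := addA Hx Hv0.
have Esx : s i * x = x1 * v0^-1.
  by rewrite -(mulKg (s i) x1) E0 sV !mulgA mulgK.
have A4 := addA Hx1 (groupVr Hv0); rewrite -Esx len_inv in A4.
have B1 := len_sw i x1; have B2 := len_sw i x.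
rewrite -E0 in A3.
have B3 : L v <= L v0 + L v1 by rewrite Evv len_mul.
rewrite -E Hl Hu in A1; rewrite -E1 Lu1w Lu1 in A2.
have Lv0 : L v0 <= 1 by llia.
case: (ltngtP (L v0) 1) Lv0 => // Hv0l _.
  have Ev0 : v0 = 1 by apply: len0; llia.
  rewrite Ev0 mulg1 in E0; rewrite Ev0 mul1g in Evv.
  have Hbv : br v' v1 by move: Hb; rewrite Evv.
  have [u1' [Hb1 Hu1']] := IH u1 w x1 v1 v' Lu1 Hw Lu1w Hx1 Hv1 E1 Hbv.
  exists (s i * u1'); split.
    by rewrite Eu; apply: claim1 Hb1 _; rewrite -Eu Hu Lu1.
  by rewrite -mulgA Hu1' mulgA E0.
have [k Ek] := len1 Hv0l.
rewrite Ek in E0 Evv Esx A3 A4 Hv0l.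
have Exx1 : x1 = x.
  have Hlt : L (s i * (x * s k)) < L (x * s k).
    rewrite -E0 mulgA Hinv mul1g; llia.
  move: Hlt; rewrite exch ?refl_s // eta_mul eta_s.
  case Ee: (eta x (s i)) => /=.
    move=> _; have := exch1 (refl_s i) Ee; rewrite Esx sV => H; exfalso.
    rewrite Esx sV in A4; llia.
  move/eqP; rewrite conjgE => Ek'.
  have : s i * x = x * s k by rewrite -Ek' mulKVg.
  by rewrite -E0 => /mulgI.
rewrite Exx1 in E1 Hx1 A2.
have Lv : L v = (L v1).+1 by llia.
have Hdown : L (s k * v) < L v by rewrite Lv Evv mulgA Hinv mul1g.
have Esk : s k * v = v1 by rewrite Evv mulgA Hinv mul1g.
case: (claim3 Hb Hdown); rewrite Esk => Hb'.
  have [u1' [Hb1 Hu1']] := IH u1 w x v1 v' Lu1 Hw Lu1w Hx1 Hv1 E1 Hb'.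
  exists u1'; split => //.
  apply: br_trans Hb1 _; rewrite Eu; apply: br_sup.
  by rewrite -Eu Hu Lu1.
have [u1' [Hb1 Hu1']] := IH u1 w x v1 (s k * v') Lu1 Hw Lu1w Hx1 Hv1 E1 Hb'.
exists (s i * u1'); split.
  by rewrite Eu; apply: claim1 Hb1 _; rewrite -Eu Hu Lu1.
have Esx' : s i * x = x * s k by move: E0; rewrite Exx1.
by rewrite -mulgA Hu1' mulgA Esx' -mulgA (mulgA (s k)) Hinv mul1g.
Qed.

End Cox.

Theorem lemma3p10 (gT : finGroupType) (I : finType) (s : I -> gT)
  (Hcox : coxeter_system s) (Hcryst : crystallographic s)
  (J : {set I}) (w u x v : gT) :
  w \in min_reps s J ->
  cox_len s (u * w) = (cox_len s u + cox_len s w)%N ->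
  x \in min_reps s J -> v \in parabolic s J ->
  u * w = x * v ->
  forall v' : gT, bruhat s v' v ->
  exists u' : gT, bruhat s u' u /\ u' * w = x * v'.
Proof.
case: Hcox => Hgen _ Hsq Hpres.
have Hinv : forall i, s i * s i = 1.
  by move=> i; rewrite -[RHS](proj2 (Hsq i)) expgS expg1.
move=> Hw Hl Hx Hv E v' Hb.
exact: (mainL Hgen Hinv Hpres (erefl _) Hw Hl Hx Hv E Hb).
Qed.
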